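(* Let $G$ be a finite group with pairwise non-isomorphic irreducible complex representations $(V_1,\rho_1),\dots,(V_k,\rho_k)$, and let $X$ be a $G$-homogeneous space (a finite set with a transitive $G$-action). Let $Q$ be a probability distribution on $G$ and put $q:=\sum_{g\in G}Q(g)e_g\in\mathbb{C}G$. Then \[\frac{1}{|X|}\sum_{x\in X}\|q\cdot e_{x}-\overline{u}\|_{\rm TV}^2\leq \frac{1}{4}\sum_{V_j\neq {\rm triv}} m(V_j, \mathbb{C} X) \|\hat{Q}(\rho_j)\|_{\rm Fb}^2\] and \[\frac{1}{|X|}\sum_{x\in X}\|q\cdot e_{x}-\overline{u}\|_{\rm TV}^2 \geq \frac{1}{4|X|}\sum_{V_j\neq {\rm triv}} m(V_j, \mathbb{C} X) \|\hat{Q}(\rho_j)\|_{\rm Fb}^2,\] where the sums run over the nontrivial irreducible representations. If furthermore $\|q\cdot e_{x}\|_2$ is independent of $x\in X$, then for every $x\in X$ \[\frac{1}{4|X|}\sum_{V_j\neq {\rm triv}} m(V_j, \mathbb{C} X) \|\hat{Q}(\rho_j)\|_{\rm Fb}^2\leq \|q\cdot e_{x}-\overline{u}\|_{\rm TV}^2\leq \frac{1}{4}\sum_{V_j\neq {\rm triv}} m(V_j, \mathbb{C} X) \|\hat{Q}(\rho_j)\|_{\rm Fb}^2.\]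
   Context: $\mathbb{C}G$ is the group algebra with basis $\{e_g\}_{g\in G}$ and product $e_ge_h=e_{gh}$. $\mathbb{C}X$ is the complex vector space with basis $\{e_x:x\in X\}$, made into a $\mathbb{C}G$-module by $e_g\cdot e_x:=e_{g(x)}$ extended linearly; so $q\cdot e_x=\sum_{g}Q(g)e_{g(x)}$. Elements $h=\sum_x h(x)e_x$ of $\mathbb{C}X$ have $\|h\|_{\rm TV}:=\frac12\sum_x|h(x)|$ and $\|h\|_2:=(\sum_x|h(x)|^2)^{1/2}$. $\overline{u}:=\frac{1}{|X|}\sum_{x\in X}e_x$. $m(V_j,\mathbb{C}X)$ is the multiplicity of $V_j$ in the decomposition of the representation $\mathbb{C}X$ into irreducibles. Each $V_j$ is equipped with a $G$-invariant Hermitian inner product and a fixed orthonormal basis $B_j$; the Fourier transform of $Q$ at $\rho_j$ is the matrix $\hat{Q}(\rho_j):=\sum_{g\in G}Q(g)[\rho_j(g)]_{B_j}$. For a matrix $A$, $\|A\|_{\rm Fb}^2:={\rm Tr}(AA^* )$. *)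

(* Defs.v *)
From HB Require Import structures.
From mathcomp Require Import all_boot all_order all_algebra all_fingroup.
From mathcomp Require Import mxrepresentation.
Set Implicit Arguments. Unset Strict Implicit. Unset Printing Implicit Defensive.
Import Order.TTheory GRing.Theory Num.Theory.
Local Open Scope ring_scope.

Section Defs.
Variables (C : numClosedFieldType) (gT : finGroupType) (G : {group gT}).
Variables (T : finType) (act : gT -> T -> T).

Definition is_left_action :=
  (forall x, act 1%g x = x) /\
  (forall g h x, g \in G -> h \in G -> act (g * h)%g x = act g (act h x)).

Definition is_transitive :=
  (0 < #|T|)%N /\ (forall x y, exists2 g, g \in G & act g x = y).

Definition basisX (x : T) : {ffun T -> C} := [ffun y => (y == x)%:R].

Definition qdotX (Q : gT -> C) (x : T) : {ffun T -> C} :=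
  [ffun y => \sum_(g in G) Q g * basisX (act g x) y].

Definition ubar : {ffun T -> C} := [ffun y => #|T|%:R^-1 * \sum_(x : T) basisX x y].

Definition tv_norm (h : {ffun T -> C}) : C := 2^-1 * \sum_(x : T) `|h x|.
Definition l2_norm (h : {ffun T -> C}) : C := sqrtC (\sum_(x : T) `|h x| ^+ 2).

(* Matrix of g acting on CX in the basis (e_x), column convention:
   entry (x, y) is the coefficient of e_x in g . e_y. Indices via enum. *)
Definition permX_mx (g : gT) : 'M[C]_#|T| :=
  \matrix_(i, j) ((enum_val i == act g (enum_val j))%:R).

(* m(V, CX) := dim Hom_G(V, CX), the dimension of the space of intertwiners
   (matrices A with A rho(g) = [g]_CX A for all g in G). *)
Definition multX n (rho : mx_representation C G n) : nat :=
  \dim (\bigcap_(g in G)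
          lker (linfun (fun A : 'M[C]_(#|T|, n) => A *m rho g - permX_mx g *m A)))%VS.

End Defs.

Definition fourier (C : numClosedFieldType) (gT : finGroupType) (G : {group gT})
  n (rho : mx_representation C G n) (Q : gT -> C) : 'M[C]_n :=
  \sum_(g in G) Q g *: rho g.

Definition fb2 (C : numClosedFieldType) m n (A : 'M[C]_(m, n)) : C :=
  \tr (A *m (map_mx Num.conj A)^T).

Definition unitary_mx (C : numClosedFieldType) n (A : 'M[C]_n) : Prop :=
  A *m (map_mx Num.conj A)^T = 1%:M.

Definition is_trivial_repr (C : numClosedFieldType) (gT : finGroupType)
  (G : {group gT}) n (rho : mx_representation C G n) : bool :=
  (n == 1)%N && [forall g in G, rho g == 1%:M].

(* Main.v *)
Require Import Defs.
From HB Require Import structures.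
From mathcomp Require Import all_boot all_order all_algebra all_fingroup.
From mathcomp Require Import mxrepresentation pgroup.
Set Implicit Arguments. Unset Strict Implicit. Unset Printing Implicit Defensive.
Import Order.TTheory GRing.Theory Num.Theory.
Local Open Scope ring_scope.
Section LinAlg.
Variable F : fieldType.

Lemma idem_rank_tr k (A : 'M[F]_k) : A *m A = A -> (\rank A)%:R = \tr A.
Proof.
move=> AA.
move: (col_base A) (row_base A) (row_base_free A) (col_base_full A) (mulmx_base A).
move=> Cb Rb RbF CbF defA.
have [Ci CiC] := row_fullP CbF.
have RC : Rb *m Cb = 1%:M.
  have h1 : (Cb *m (Rb *m Cb)) *m Rb = (Cb *m 1%:M) *m Rb.
    by rewrite mulmx1 mulmxA defA -mulmxA defA AA.
  have h2 := row_free_inj RbF h1.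
  by move: (congr1 (mulmx Ci) h2); rewrite !mulmxA CiC !mul1mx.
by rewrite -{2}defA mxtrace_mulC RC mxtrace1.
Qed.

Lemma linfunE' (aT rT : vectType F) (f : aT -> rT) (hf : linear f) v :
  linfun f v = f v.
Proof.
pose Lf : {linear aT -> rT} := HB.pack f (GRing.isLinear.Build F aT rT *:%R f hf).
exact: (lfunE Lf v).
Qed.

End LinAlg.
Section LinAlg2.
Import VectorInternalTheory.
Variable F : fieldType.

Lemma dim_limg_idem m n (E : 'M[F]_(m,n) -> 'M[F]_(m,n)) (hE : linear E)
   (EE : forall A, E (E A) = E A) :
  (\dim (limg (linfun E)))%:R = \tr (lin_mx E).
Proof.
pose Lf : {linear 'M[F]_(m,n) -> 'M[F]_(m,n)} :=
  HB.pack E (GRing.isLinear.Build F _ _ *:%R E hE).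
set f := linfun E.
set L := lin_mx E.
have LL : L *m L = L.
  apply/row_matrixP => i; rewrite !rowE mulmxA.
  by rewrite [_ *m L](mul_rV_lin Lf) [_ *m L](mul_rV_lin Lf) /= mxvecK EE.
set Fm := f2mx f.
have hF u : u *m Fm = v2r (E (r2v u)).
  rewrite -[E _](linfunE' hE) -/f. by rewrite unlock /= !r2vK.
pose B := lin1_mx (mxvec \o (r2v : 'rV_(dim 'M[F]_(m,n)) -> 'M[F]_(m,n))).
pose Bi := lin1_mx ((v2r : 'M[F]_(m,n) -> 'rV_(dim 'M[F]_(m,n))) \o (vec_mx : 'rV_(m * n) -> 'M[F]_(m,n))).
have hB u : u *m B = mxvec (r2v u) by rewrite mul_rV_lin1.
have hBi u : u *m Bi = v2r (vec_mx u) by rewrite mul_rV_lin1.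
have BiB : Bi *m B = 1%:M.
  by apply/row_matrixP => i; rewrite !rowE mulmxA hBi hB v2rK vec_mxK mulmx1.
have FBLB : Fm = B *m L *m Bi.
  apply/(@row_matrixP _ (m * n) (m * n)) => i; rewrite !rowE hF !mulmxA hB [_ *m L](mul_rV_lin Lf).
  by rewrite hBi /= !mxvecK.
have FF : Fm *m Fm = Fm.
  by rewrite FBLB -!mulmxA (mulmxA Bi) BiB mul1mx (mulmxA L) LL.
have trF : \tr Fm = \tr L.
  by rewrite FBLB mxtrace_mulC mulmxA BiB mul1mx.
rewrite -trF -idem_rank_tr //; congr (_%:R).
by rewrite unlock /dimv /= genmxE genmx1 mul1mx.
Qed.
End LinAlg2.
Section TrLin.
Variable F : fieldType.

Lemma tr_lin_mx m n (f : 'M[F]_(m,n) -> 'M[F]_(m,n)) :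
  \tr (lin_mx f) = \sum_a \sum_b f (delta_mx a b) a b.
Proof.
rewrite /mxtrace (reindex _ (curry_mxvec_bij m n)) /=.
rewrite pair_big /=; apply: eq_bigr => -[a b] _ /=.
by rewrite mxE /= vec_mx_delta mxvecE.
Qed.

Lemma mul_delta_entry m n p q (X : 'M[F]_(m,n)) (Y : 'M[F]_(p,q)) a b i j :
  (X *m delta_mx a b *m Y) i j = X i a * Y b j.
Proof.
rewrite mxE (bigD1 b) //= big1 ?addr0 => [|l nlb].
  rewrite mxE (bigD1 a) //= big1 ?addr0 => [|k nka]; first by rewrite mxE !eqxx mulr1.
  by rewrite mxE (negbTE nka) mulr0.
rewrite mxE big1 ?mul0r // => k _; by rewrite mxE (negbTE nlb) andbF mulr0.
Qed.

End TrLin.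
Section Hom.
Variables (C : numFieldType) (gT : finGroupType) (G : {group gT}).

Lemma sum_mulgr (V : nmodType) (x : gT) (h : gT -> V) :
  x \in G -> \sum_(g in G) h (g * x)%g = \sum_(g in G) h g.
Proof.
move=> Gx; rewrite [RHS](reindex_inj (mulIg x)) /=.
by apply: eq_bigl => g; rewrite groupMr.
Qed.

Lemma sum_invg (V : nmodType) (h : gT -> V) :
  \sum_(g in G) h (g^-1)%g = \sum_(g in G) h g.
Proof.
rewrite [RHS](reindex_inj invg_inj) /=.
by apply: eq_bigl => g; rewrite groupV.
Qed.

Definition hom_space m n (s : mx_representation C G m)
   (r : mx_representation C G n) : {vspace 'M[C]_(m, n)} :=
  (\bigcap_(g in G) lker (linfun (fun A : 'M[C]_(m, n) => A *m r g - s g *m A)))%VS.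

Lemma lin_hom_fun m n (X : 'M[C]_m) (Y : 'M[C]_n) :
  linear (fun A : 'M[C]_(m, n) => A *m Y - X *m A).
Proof.
move=> a A B; rewrite mulmxDl mulmxDr -scalemxAl -scalemxAr.
by rewrite scalerBr addrACA opprD.
Qed.

Lemma mem_hom_space m n (s : mx_representation C G m)
   (r : mx_representation C G n) A :
  reflect (forall g, g \in G -> A *m r g = s g *m A) (A \in hom_space s r).
Proof.
rewrite memvE; apply: (iffP subv_bigcapP) => H g Gg.
  by move: (H g Gg); rewrite -memvE memv_ker (linfunE' (lin_hom_fun _ _)) subr_eq0 => /eqP.
by rewrite -memvE memv_ker (linfunE' (lin_hom_fun _ _)) subr_eq0 (H g Gg).
Qed.

Section Avg.
Variables (m n : nat) (s : mx_representation C G m) (r : mx_representation C G n).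

Definition Eavg (A : 'M[C]_(m, n)) : 'M[C]_(m, n) :=
  #|G|%:R^-1 *: \sum_(g in G) (s (g^-1)%g *m A *m r g).

Lemma Eavg_linear : linear Eavg.
Proof.
move=> a A B; rewrite /Eavg scalerA mulrC -scalerA -scalerDr; congr (_ *: _).
rewrite scaler_sumr -big_split /=; apply: eq_bigr => g _.
by rewrite mulmxDr mulmxDl -scalemxAr -scalemxAl.
Qed.

Lemma GneqC : (#|G|%:R : C) != 0.
Proof. by rewrite pnatr_eq0 -lt0n cardG_gt0. Qed.

Lemma Eavg_hom A : Eavg A \in hom_space s r.
Proof.
apply/mem_hom_space => h Gh.
rewrite /Eavg -scalemxAl -scalemxAr; congr (_ *: _).
rewrite mulmx_suml mulmx_sumr.
rewrite -[LHS](sum_mulgr (fun g => s (g^-1)%g *m A *m r g *m r h) (groupVr Gh)).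
apply: eq_bigr => g Gg.
rewrite invMg invgK repr_mxM ?groupV // -!mulmxA -repr_mxM ?groupV //.
  by rewrite mulgKV.
by rewrite groupM ?groupV.
Qed.

Lemma Eavg_id A : A \in hom_space s r -> Eavg A = A.
Proof.
move/mem_hom_space => HA; rewrite /Eavg.
rewrite (eq_bigr (fun _ => A)) => [|g Gg]; last first.
  by rewrite -mulmxA HA // mulmxA -repr_mxM ?groupV // mulVg repr_mx1 mul1mx.
by rewrite sumr_const -scaler_nat scalerA mulVf ?GneqC // scale1r.
Qed.

Lemma hom_space_limg : hom_space s r = limg (linfun Eavg).
Proof.
apply/vspaceP => A; apply/idP/idP => [HA | /memv_imgP [B _ ->]].
  by rewrite -(Eavg_id HA) -(linfunE' Eavg_linear) memv_img ?memvf.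
by rewrite (linfunE' Eavg_linear); apply: Eavg_hom.
Qed.

Lemma dim_hom_space :
  (\dim (hom_space s r))%:R =
    #|G|%:R^-1 * \sum_(g in G) \tr (s (g^-1)%g) * \tr (r g).
Proof.
have EE A : Eavg (Eavg A) = Eavg A by apply: Eavg_id; apply: Eavg_hom.
rewrite hom_space_limg (dim_limg_idem Eavg_linear EE) tr_lin_mx.
under eq_bigr => a _ do under eq_bigr => b _ do
  rewrite /Eavg mxE summxE (eq_bigr _ (fun g _ => mul_delta_entry _ _ _ _ _ _)).
under eq_bigr => a _ do rewrite -mulr_sumr.
rewrite -mulr_sumr; congr (_ * _).
under eq_bigr => a _ do rewrite exchange_big.
rewrite exchange_big; apply: eq_bigr => g Gg.
by rewrite /mxtrace mulr_suml; apply: eq_bigr => a _; rewrite mulr_sumr.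
Qed.
End Avg.
End Hom.
Section Irr.
Variables (C : numClosedFieldType) (gT : finGroupType) (G : {group gT}).
Variables (k : nat) (n : 'I_k -> nat) (rho : forall j : 'I_k, mx_representation C G (n j)).
Hypothesis rho_irr : forall j, mx_irreducible (rho j).
Hypothesis rho_distinct : forall i j, mx_rsim (rho i) (rho j) -> i = j.
Hypothesis rho_complete : forall m (r : mx_representation C G m),
      mx_irreducible r -> exists j, mx_rsim (rho j) r.

Lemma hom_irr_eq0 i j A : A \in hom_space (rho i) (rho j) -> i != j -> A = 0.
Proof.
move/mem_hom_space => HA neij; apply/eqP; apply: contraNT neij => nzA.
apply/eqP; apply: rho_distinct.
have modA : mxmodule (rho j) <<A>>%MS.
  rewrite (eqmx_module _ (genmxE A)); apply/mxmoduleP => g Gg.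
  by rewrite HA // submxMl.
have [_ irrj] := proj1 (mx_irrP (rho j)) (rho_irr j).
have fullA : row_full A.
  by rewrite -(eq_row_full (genmxE A)) irrj // -mxrank_eq0 genmxE mxrank_eq0.
have modK : mxmodule (rho i) (kermx A).
  apply/mxmoduleP => g Gg; apply/sub_kermxP.
  by rewrite -mulmxA -HA // mulmxA mulmx_ker mul0mx.
have [_ irri] := proj1 (mx_irrP (rho i)) (rho_irr i).
have freeA : row_free A.
  rewrite -kermx_eq0; apply: contraNT nzA => nzK.
  have fK := irri _ modK nzK.
  rewrite -(mul1mx A); apply/eqP/sub_kermxP.
  by rewrite sub1mx; apply: fK.
exists A => //.
by move: fullA freeA; rewrite /row_full /row_free => /eqP h1 /eqP h2; exact: (etrans (esym h2) h1).
by move=> g Gg; rewrite HA.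
Qed.

Lemma dim_hom_irr_neq i j : i != j -> \dim (hom_space (rho i) (rho j)) = 0%N.
Proof.
move=> neij; apply/eqP; rewrite dimv_eq0 -subv0; apply/subvP => A HA.
by rewrite (hom_irr_eq0 HA neij) mem0v.
Qed.

Lemma dim_hom_irr_eq j : \dim (hom_space (rho j) (rho j)) = 1%N.
Proof.
have [n_gt0 _] := proj1 (mx_irrP (rho j)) (rho_irr j).
have absj := group_closure_closed_field (rho_irr j).
have -> : hom_space (rho j) (rho j) = <[1%:M]>%VS.
  apply/vspaceP => A; apply/idP/idP => [/mem_hom_space HA | /vlineP [a ->]].
    have /is_scalar_mxP [a ->] : is_scalar_mx A.
      by apply: (mx_abs_irr_cent_scalar absj); apply/centgmxP => g Gg; rewrite HA.
    by rewrite -[a%:M]scalemx1; apply: memvZ; apply: memv_line.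
  apply: memvZ; apply/mem_hom_space => g Gg; by rewrite mul1mx mulmx1.
by rewrite dim_vline -mxrank_eq0 mxrank1 -lt0n n_gt0.
Qed.

Lemma irr_orth i j :
  #|G|%:R^-1 * \sum_(g in G) \tr (rho i (g^-1)%g) * \tr (rho j g) = (i == j)%:R :> C.
Proof.
rewrite -dim_hom_space; case: eqP => [-> | /eqP neij].
  by rewrite dim_hom_irr_eq.
by rewrite dim_hom_irr_neq.
Qed.

End Irr.
Section Decomp.
Variables (C : numClosedFieldType) (gT : finGroupType) (G : {group gT}).
Variables (k : nat) (n : 'I_k -> nat) (rho : forall j : 'I_k, mx_representation C G (n j)).
Hypothesis rho_irr : forall j, mx_irreducible (rho j).
Hypothesis rho_distinct : forall i j, mx_rsim (rho i) (rho j) -> i = j.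
Hypothesis rho_complete : forall m (r : mx_representation C G m),
      mx_irreducible r -> exists j, mx_rsim (rho j) r.

Lemma pchar_group : ([pchar C]^'.-group G)%g.
Proof. by apply/pgroupP => p _ _; rewrite inE /= pchar_num. Qed.

Lemma char_coef m (s : mx_representation C G m) :
  exists c : 'I_k -> nat, forall y, y \in G ->
    \tr (s y) = \sum_j (c j)%:R * \tr (rho j y).
Proof.
pose sG := DecSocleType s.
have S1 : Socle sG = 1%:M.
  exact: reducible_Socle1 (mx_Maschke_pchar s pchar_group).
have HJ0 : forall W : sG, exists j, mx_rsim (rho j) (socle_repr W).
  by move=> W; apply: rho_complete; apply: socle_irr.
have [J HJ] := fin_all_exists HJ0.
exists (fun j => \sum_(W : sG | J W == j) socle_mult W)%N => y Gy.
have e1 : (Socle sG :=: 1%:M)%MS by rewrite S1.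
rewrite -(mxtrace_submod1 (Socle_module sG) e1 Gy) (mxtrace_Socle sG Gy).
rewrite (partition_big J predT) //=; apply: eq_bigr => j _.
rewrite natr_sum mulr_suml; apply: eq_bigr => W /eqP <-.
by rewrite (mxtrace_rsim (HJ W) Gy) mulr_natl.
Qed.

Lemma char_decomp m (s : mx_representation C G m) y : y \in G ->
  \tr (s y) = \sum_j (\dim (hom_space s (rho j)))%:R * \tr (rho j y).
Proof.
move=> Gy; have [c Hc] := char_coef s.
suff Hd : forall j, (\dim (hom_space s (rho j)))%:R = (c j)%:R :> C.
  by rewrite Hc //; apply: eq_bigr => j _; rewrite Hd.
move=> l; rewrite dim_hom_space.
under eq_bigr => g Gg do rewrite (Hc _ (groupVr Gg)) mulr_suml.
rewrite exchange_big mulr_sumr.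
under eq_bigr => j _ do rewrite -(eq_bigr _ (fun g _ => mulrA _ _ _)) -mulr_sumr mulrCA (irr_orth rho_irr rho_distinct).
rewrite (bigD1 l) //= big1 ?addr0 ?eqxx ?mulr1 // => j /negbTE ->.
by rewrite mulr0.
Qed.

End Decomp.
Section PermRep.
Variables (C : numClosedFieldType) (gT : finGroupType) (G : {group gT}).
Variables (T : finType) (act : gT -> T -> T).
Hypothesis hact : is_left_action G act.
Hypothesis htrans : is_transitive G act.

Lemma act1 x : act 1%g x = x. Proof. by case: hact. Qed.
Lemma actM g h x : g \in G -> h \in G -> act (g * h)%g x = act g (act h x).
Proof. by case: hact => _; apply. Qed.
Lemma actK g x : g \in G -> act (g^-1)%g (act g x) = x.
Proof. by move=> Gg; rewrite -actM ?groupV // mulVg act1. Qed.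
Lemma actKV g x : g \in G -> act g (act (g^-1)%g x) = x.
Proof. by move=> Gg; rewrite -actM ?groupV // mulgV act1. Qed.
Lemma act_inj g : g \in G -> injective (act g).
Proof. by move=> Gg x y /(congr1 (act (g^-1)%g)); rewrite !actK. Qed.

Lemma permX_mx_repr : mx_repr G (permX_mx C act).
Proof.
split=> [|g h Gg Gh /=].
  apply/matrixP => i j; rewrite !mxE act1 (inj_eq enum_val_inj).
  by [].
apply/matrixP => i j; rewrite !mxE actM //.
rewrite (bigD1 (enum_rank (act h (enum_val j)))) //= big1 ?addr0.
  by rewrite !mxE enum_rankK eqxx mulr1.
move=> l nl; rewrite !mxE.
have /negbTE -> : enum_val l != act h (enum_val j).
  by apply: contra nl => /eqP <-; rewrite enum_valK.
by rewrite mulr0.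
Qed.

Definition rX := MxRepresentation permX_mx_repr.

Lemma tr_rX y : \tr (rX y) = \sum_(x : T) (x == act y x)%:R.
Proof.
rewrite /mxtrace /= (big_enum_val (A := T)) /=; apply: eq_bigr => i _.
by rewrite mxE.
Qed.

Lemma burnside : \sum_(g in G) \tr (rX (g^-1)%g) = #|G|%:R.
Proof.
under eq_bigr => g _ do rewrite tr_rX.
rewrite (sum_invg G (fun g => \sum_(x : T) (x == act g x)%:R : C)) exchange_big /=.
have [T0 tr] := htrans.
have [x0 _] := card_gt0P T0.
transitivity (\sum_(x : T) \sum_(g in G) (act g x0 == x)%:R : C).
  apply: eq_bigr => x _; have [b Gb <-] := tr x0 x.
  rewrite -(sum_mulgr (fun g => (act g x0 == act b x0)%:R : C) Gb).
  by apply: eq_bigr => g Gg; rewrite actM // eq_sym.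
rewrite exchange_big /= -sumr_const; apply: eq_bigr => g Gg.
rewrite (bigD1 (act g x0)) //= eqxx big1 ?addr0 // => x nx.
by rewrite eq_sym (negbTE nx).
Qed.

End PermRep.

Section Triv.
Variables (C : numClosedFieldType) (gT : finGroupType) (G : {group gT}).
Variables (k : nat) (n : 'I_k -> nat) (rho : forall j : 'I_k, mx_representation C G (n j)).
Hypothesis rho_distinct : forall i j, mx_rsim (rho i) (rho j) -> i = j.
Hypothesis rho_complete : forall m (r : mx_representation C G m),
      mx_irreducible r -> exists j, mx_rsim (rho j) r.

Definition triv_mx (g : gT) : 'M[C]_1 := 1%:M.
Lemma triv_mx_repr : mx_repr G triv_mx.
Proof. by split=> // g h _ _; rewrite /triv_mx mulmx1. Qed.
Definition triv := MxRepresentation triv_mx_repr.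
Lemma triv_irr : mx_irreducible triv.
Proof. exact: mx_abs_irrW (linear_mx_abs_irr triv (erefl 1%N)). Qed.

Lemma rsim_triv i : is_trivial_repr (rho i) -> mx_rsim (rho i) triv.
Proof.
case/andP => /eqP ni /forall_inP Hi.
have i0 : 'I_(n i) by rewrite ni; exact: ord0.
have nzB : (const_mx 1 : 'M[C]_(n i, 1)) != 0.
  apply/eqP => /matrixP /(_ i0 0); rewrite !mxE => /eqP; by rewrite oner_eq0.
have rB : \rank (const_mx 1 : 'M[C]_(n i, 1)) = 1%N.
  apply/eqP; rewrite eqn_leq rank_leq_col lt0n mxrank_eq0 nzB //.
exists (const_mx 1 : 'M[C]_(n i, 1)) => //.
  by rewrite /row_free rB ni.
by move=> g Gg; rewrite (eqP (Hi g Gg)) mul1mx /= /triv_mx mulmx1.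
Qed.

Lemma triv_unique : exists j0, is_trivial_repr (rho j0) /\ forall i, is_trivial_repr (rho i) -> i = j0.
Proof.
have [j0 Hj0] := rho_complete triv_irr.
have tj0 : is_trivial_repr (rho j0).
  apply/andP; split; first by rewrite (mxrank_rsim Hj0).
  apply/forall_inP => g Gg; apply/eqP.
  exact: (mx_rsim_scalar Gg (mx_rsim_sym Hj0) (erefl (triv g))).
exists j0; split=> // i ti; apply: rho_distinct.
exact: mx_rsim_trans (rsim_triv ti) (mx_rsim_sym Hj0).
Qed.

End Triv.
Section Fourier.
Variables (C : numClosedFieldType) (gT : finGroupType) (G : {group gT}).

Lemma unitary_inv n (r : mx_representation C G n) h : h \in G ->
  unitary_mx (r h) -> (map_mx Num.conj (r h))^T = r (h^-1)%g.
Proof.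
move=> Gh U; rewrite repr_mxV //.
have [uh _] := mulmx1_unit U.
by rewrite -[LHS](mulKmx uh) U mulmx1.
Qed.

Lemma fb2_fourier n (r : mx_representation C G n) (Q : gT -> C) :
  (forall g, g \in G -> unitary_mx (r g)) -> (forall g, g \in G -> 0 <= Q g) ->
  fb2 (fourier r Q) =
    \sum_(g in G) \sum_(h in G) Q g * Q h * \tr (r ((h^-1) * g)%g).
Proof.
move=> Ur Q0; rewrite /fb2 /fourier.
have -> : (map_mx Num.conj (\sum_(g in G) Q g *: r g))^T =
          \sum_(h in G) Q h *: r (h^-1)%g.
  rewrite raddf_sum /= raddf_sum /=; apply: eq_bigr => h Gh.
  rewrite map_mxZ /= linearZ /= (unitary_inv Gh (Ur h Gh)).
  by rewrite conj_Creal // ger0_real ?Q0.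
rewrite mulmx_suml raddf_sum /=; apply: eq_bigr => g Gg.
rewrite mulmx_sumr raddf_sum /=; apply: eq_bigr => h Gh.
rewrite -scalemxAl -scalemxAr !linearZ /= mxtrace_mulC -repr_mxM ?groupV //.
by rewrite mulrA.
Qed.

End Fourier.
Section MainId.
Variables (C : numClosedFieldType) (gT : finGroupType) (G : {group gT}).
Variables (T : finType) (act : gT -> T -> T).
Hypothesis hact : is_left_action G act.
Variable Q : gT -> C.

Lemma qdotXE x y : qdotX G act Q x y = \sum_(g in G) Q g * (y == act g x)%:R.
Proof. by rewrite ffunE; apply: eq_bigr => g _; rewrite ffunE. Qed.

Lemma ubarE y : ubar C T y = #|T|%:R^-1.
Proof.
rewrite ffunE (bigD1 y) //= big1 ?addr0 => [|x nx]; rewrite ffunE ?eqxx ?mulr1 //.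
by rewrite eq_sym (negbTE nx).
Qed.

Lemma sum_eq1 (x : T) : \sum_(y : T) (y == x)%:R = 1 :> C.
Proof.
rewrite (bigD1 x) //= big1 ?addr0 ?eqxx // => y ny; by rewrite (negbTE ny).
Qed.

Lemma tr_rX_eq g h : g \in G -> h \in G ->
  \tr (rX C hact (h^-1 * g)%g) = \sum_(x : T) (act g x == act h x)%:R :> C.
Proof.
move=> Gg Gh; rewrite tr_rX; apply: eq_bigr => x _.
rewrite (actM hact) ?groupV //.
have -> // : (x == act (h^-1)%g (act g x)) = (act g x == act h x).
apply/idP/idP => /eqP e.
  by rewrite {2}e (actKV hact).
by rewrite e (actK hact).
Qed.

Lemma sum_sq :
  \sum_(x : T) \sum_(y : T) (qdotX G act Q x y) ^+ 2 =
  \sum_(g in G) \sum_(h in G) Q g * Q h * \tr (rX C hact (h^-1 * g)%g).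
Proof.
transitivity (\sum_(x : T) \sum_(g in G) \sum_(h in G) Q g * Q h * (act g x == act h x)%:R).
  apply: eq_bigr => x _.
  under eq_bigr => y _ do rewrite qdotXE expr2 mulr_suml.
  rewrite exchange_big; apply: eq_bigr => g Gg.
  under eq_bigr => y _ do rewrite mulr_sumr.
  rewrite exchange_big; apply: eq_bigr => h Gh.
  rewrite (bigD1 (act g x)) //= big1 ?addr0 => [|y ny]; last first.
    by rewrite (negbTE ny) mulr0 mul0r.
  by rewrite eqxx mulr1 mulrA.
rewrite exchange_big; apply: eq_bigr => g Gg.
rewrite exchange_big; apply: eq_bigr => h Gh.
by rewrite (tr_rX_eq Gg Gh) mulr_sumr.
Qed.

End MainId.
Section Ineq.
Variables (C : numDomainType) (T : finType).

Lemma sq_sum_ge (r : T -> C) : (forall y, 0 <= r y) ->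
  \sum_y r y ^+ 2 <= (\sum_y r y) ^+ 2.
Proof.
move=> r0; rewrite expr2 mulr_suml; apply: ler_sum => y _.
rewrite mulr_sumr (bigD1 y) //= expr2 lerDl.
by apply: sumr_ge0 => z _; rewrite mulr_ge0.
Qed.

Lemma cauchy_schwarz (r : T -> C) : (forall y, 0 <= r y) ->
  (\sum_y r y) ^+ 2 <= #|T|%:R * \sum_y r y ^+ 2.
Proof.
move=> r0.
have amgm y z : (r y * r z) *+ 2 <= r y ^+ 2 + r z ^+ 2.
  have : 0 <= (r y - r z) ^+ 2 by rewrite -realEsqr rpredB ?ger0_real.
  by rewrite sqrrB addrAC subr_ge0.
rewrite -(ler_pMn2r (_ : (0 < 2)%N)) //.
rewrite expr2 mulr_suml -sumrMnl.
apply: (@le_trans _ _ (\sum_y \sum_z (r y ^+ 2 + r z ^+ 2))).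
  apply: ler_sum => y _; rewrite mulr_sumr -sumrMnl.
  by apply: ler_sum => z _; apply: amgm.
rewrite mulr_natl -mulrnA mulnC mulrnA.
under eq_bigr => y _ do rewrite big_split /= sumr_const.
rewrite big_split /= sumr_const sumrMnl mulr2n.
by rewrite mulrnDl; apply: lexx.
Qed.

End Ineq.
Section Final.
Variables (C : numClosedFieldType) (gT : finGroupType) (G : {group gT}).
Variables (k : nat) (n : 'I_k -> nat) (rho : forall j : 'I_k, mx_representation C G (n j)).
Hypothesis rho_irr : forall j, mx_irreducible (rho j).
Hypothesis rho_unitary : forall j g, g \in G -> unitary_mx (rho j g).
Hypothesis rho_distinct : forall i j, mx_rsim (rho i) (rho j) -> i = j.
Hypothesis rho_complete : forall m (r : mx_representation C G m),
      mx_irreducible r -> exists j, mx_rsim (rho j) r.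
Variables (T : finType) (act : gT -> T -> T).
Hypothesis hact : is_left_action G act.
Hypothesis htrans : is_transitive G act.
Variable Q : gT -> C.
Hypothesis Q_ge0 : forall g, g \in G -> 0 <= Q g.
Hypothesis Q_sum1 : \sum_(g in G) Q g = 1.

Local Notation a x y := (qdotX G act Q x y).

Lemma a_ge0 x y : 0 <= a x y.
Proof.
rewrite qdotXE; apply: sumr_ge0 => g Gg; by rewrite mulr_ge0 ?Q_ge0 ?ler0n.
Qed.

Lemma a_sum x : \sum_y a x y = 1.
Proof.
under eq_bigr => y _ do rewrite qdotXE.
rewrite exchange_big /= -[RHS]Q_sum1; apply: eq_bigr => g Gg.
by rewrite -mulr_sumr sum_eq1 mulr1.
Qed.

Lemma NC : (#|T|%:R : C) != 0.
Proof. by case: htrans => T0 _; rewrite pnatr_eq0 -lt0n. Qed.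

Lemma hE x y : (qdotX G act Q x - ubar C T) y = a x y - #|T|%:R^-1.
Proof. by rewrite !ffunE; congr (_ - _); have := ubarE C y; rewrite ffunE => ->. Qed.

Lemma DE x : \sum_y `|(qdotX G act Q x - ubar C T) y| ^+ 2 =
             \sum_y a x y ^+ 2 - #|T|%:R^-1.
Proof.
set c := #|T|%:R^-1 : C.
under eq_bigr => y _ do rewrite hE real_normK ?rpredB ?ger0_real ?a_ge0 ?invr_ge0 ?ler0n // sqrrB.
rewrite !big_split /= sumrN sumr_const sumrMnl -mulr_suml a_sum mul1r.
rewrite -[_ ^+ 2 *+ _]mulr_natr expr2 -mulrA mulVf ?NC // mulr1 mulr2n.
by rewrite opprD addrA subrK.
Qed.


Lemma S_eq :
  \sum_(j < k | ~~ is_trivial_repr (rho j))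
     (multX act (rho j))%:R * fb2 (fourier (rho j) Q) =
  \sum_x \sum_y a x y ^+ 2 - 1.
Proof.
have [j0 [tj0 uj0]] := triv_unique rho_distinct rho_complete.
have Hall : \sum_j (multX act (rho j))%:R * fb2 (fourier (rho j) Q) =
            \sum_x \sum_y a x y ^+ 2.
  rewrite (sum_sq hact).
  under eq_bigr => j _ do rewrite (fb2_fourier (rho_unitary j) Q_ge0) mulr_sumr.
  rewrite exchange_big; apply: eq_bigr => g Gg.
  under eq_bigr => j _ do rewrite mulr_sumr.
  rewrite exchange_big; apply: eq_bigr => h Gh.
  rewrite (char_decomp rho_irr rho_distinct rho_complete (rX C hact)) ?groupM ?groupV //.
  rewrite mulr_sumr; apply: eq_bigr => j _; by rewrite mulrCA.
have tj0c := tj0.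
case/andP: tj0 => /eqP n1 /forall_inP t1.
have m0 : (multX act (rho j0))%:R = 1 :> C.
  rewrite -[multX act (rho j0)]/(\dim (hom_space (rX C hact) (rho j0))).
  rewrite dim_hom_space.
  under eq_bigr => g Gg do rewrite (eqP (t1 g Gg)) mxtrace1 n1 mulr1.
  by rewrite (burnside C hact htrans) mulVf ?GneqC.
have f0 : fb2 (fourier (rho j0) Q) = 1.
  rewrite (fb2_fourier (rho_unitary j0) Q_ge0).
  under eq_bigr => g Gg do under eq_bigr => h Gh do
    rewrite (eqP (t1 _ (groupM (groupVr Gh) Gg))) mxtrace1 n1 mulr1.
  under eq_bigr => g Gg do rewrite -mulr_sumr Q_sum1 mulr1.
  exact: Q_sum1.
rewrite -Hall [in RHS](bigD1 j0) //= m0 f0 mulr1 addrC addrK.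
apply: eq_bigl => j; apply/idP/idP => [nt | nj].
  by apply: contraNneq nt => ->.
by apply: contra nj => /uj0 ->.
Qed.

End Final.

Unset Implicit Arguments.

Theorem theorem1p1 (C : numClosedFieldType) (gT : finGroupType) (G : {group gT})
  (k : nat) (n : 'I_k -> nat) (rho : forall j : 'I_k, mx_representation C G (n j))
  (rho_irr : forall j, mx_irreducible (rho j))
  (rho_unitary : forall j g, g \in G -> unitary_mx (rho j g))
  (rho_distinct : forall i j, mx_rsim (rho i) (rho j) -> i = j)
  (rho_complete : forall m (r : mx_representation C G m),
      mx_irreducible r -> exists j, mx_rsim (rho j) r)
  (T : finType) (act : gT -> T -> T)
  (hact : is_left_action G act) (htrans : is_transitive G act)
  (Q : gT -> C) (Q_ge0 : forall g, g \in G -> 0 <= Q g)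
  (Q_sum1 : \sum_(g in G) Q g = 1) :
  let S := \sum_(j < k | ~~ is_trivial_repr (rho j))
             (multX act (rho j))%:R * fb2 (fourier (rho j) Q) in
  let d x := tv_norm (qdotX G act Q x - ubar C T) in
  [/\ #|T|%:R^-1 * \sum_(x : T) d x ^+ 2 <= 4^-1 * S,
      (4 * #|T|%:R)^-1 * S <= #|T|%:R^-1 * \sum_(x : T) d x ^+ 2
    & (forall x y, l2_norm (qdotX G act Q x) = l2_norm (qdotX G act Q y)) ->
      forall x, (4 * #|T|%:R)^-1 * S <= d x ^+ 2 <= 4^-1 * S].
Proof.
move=> S d.
pose r x y := `|(qdotX G act Q x - ubar C T) y|.
pose D x := \sum_y r x y ^+ 2.
pose s x := \sum_y r x y.
have r0 x y : 0 <= r x y by apply: normr_ge0.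
have NC0 := NC C htrans.
have N0 : 0 <= (#|T|%:R : C)^-1 by rewrite invr_ge0 ler0n.
have i40 : 0 <= (4 : C)^-1 by rewrite invr_ge0 ler0n.
have SD : S = \sum_x D x.
  rewrite /S (S_eq rho_irr rho_unitary rho_distinct rho_complete hact htrans Q_ge0 Q_sum1).
  rewrite /D /r; under [RHS]eq_bigr => x _ do rewrite (DE htrans Q_ge0 Q_sum1).
  by rewrite sumrB sumr_const -[_ *+ _]mulr_natr mulVf.
have dE x : d x ^+ 2 = 4^-1 * s x ^+ 2.
  rewrite /d /tv_norm exprMn exprVn; congr (_ * _); congr (_^-1).
  by rewrite expr2 -natrM.
have CS x : s x ^+ 2 <= #|T|%:R * D x by apply: cauchy_schwarz.
have LB x : D x <= s x ^+ 2 by apply: sq_sum_ge.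
split.
- rewrite SD.
  apply: (@le_trans _ _ (#|T|%:R^-1 * \sum_x 4^-1 * (#|T|%:R * D x))).
    apply: ler_wpM2l => //; apply: ler_sum => x _; rewrite dE.
    by apply: ler_wpM2l.
  under eq_bigr => x _ do rewrite mulrCA.
  by rewrite -mulr_sumr mulrA mulVf // mul1r mulr_sumr.
- rewrite SD invfM [_^-1 * _^-1]mulrC -mulrA [4^-1 * _]mulr_sumr.
  apply: ler_wpM2l => //; apply: ler_sum => x _; rewrite dE.
  by apply: ler_wpM2l.
move=> Hl2 x.
have Dc z : D z = D x.
  rewrite /D /r !(DE htrans Q_ge0 Q_sum1); congr (_ - _).
  have l2E w : l2_norm (qdotX G act Q w) ^+ 2 = \sum_y qdotX G act Q w y ^+ 2.
    rewrite /l2_norm sqrtCK; apply: eq_bigr => y _.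
    by rewrite ger0_norm ?a_ge0.
  by rewrite -!l2E (Hl2 z x).
have SDx : S = #|T|%:R * D x.
  by rewrite SD (eq_bigr _ (fun z _ => Dc z)) sumr_const mulr_natl.
rewrite dE SDx invfM -mulrA (mulrA _ #|T|%:R) mulVf // mul1r.
by apply/andP; split; apply: ler_wpM2l.
Qed.
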